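(* Let $(\mathsf{X},\mu)$, $(\mathsf{Y},\nu)$ be Polish probability spaces, $c:\mathsf{X}\times\mathsf{Y}\to[0,\infty)$ continuous, $\pi_\varepsilon$ the $(c,\varepsilon)$-cyclically invariant coupling for each $\varepsilon>0$ (assumed to exist), and assume $\pi_\varepsilon\to\pi_*$ weakly as $\varepsilon\to0$ for some $\pi_*\in\Pi(\mu,\nu)$. Let $\Gamma:=\operatorname{spt}\pi_*$, $\mathsf{X}_0:=\operatorname{proj}_{\mathsf{X}}\Gamma$, $\mathsf{Y}_0:=\operatorname{proj}_{\mathsf{Y}}\Gamma$. Assume that uniqueness of Kantorovich potentials holds on $\mathsf{X}_0$: for any $c$-convex functions $\psi_1,\psi_2$ on $\mathsf{X}$ with $\Gamma\subset\partial_c\psi_i$ ($i=1,2$), the difference $\psi_1-\psi_2$ is constant on $\mathsf{X}_0$. Then for any Kantorovich potential $\psi$, $$I(x,y)=c(x,y)-\psi^c(y)+\psi(x),\qquad (x,y)\in\mathsf{X}_0\times\mathsf{Y}_0.$$ In particular $I<\infty$ on $\mathsf{X}_0\times\mathsf{Y}_0$. Moreover, if $(x,y),(x',y')\in\mathsf{X}_0\times\mathsf{Y}_0$ are such that $(x',y),(x,y')\in\Gamma$, then $$I(x,y)+I(x',y')=c(x,y)+c(x',y')-c(x,y')-c(x',y).$$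
   Context: $\Pi(\mu,\nu)$ is the set of couplings of $\mu,\nu$ and $P:=\mu\otimes\nu$. A coupling $\pi$ is $(c,\varepsilon)$-cyclically invariant if $\pi\sim P$ and its density admits a version $\frac{d\pi}{dP}:\mathsf{X}\times\mathsf{Y}\to(0,\infty)$ with $\prod_{i=1}^k\frac{d\pi}{dP}(x_i,y_i)=\exp\big(-\frac1\varepsilon[\sum_{i=1}^k c(x_i,y_i)-\sum_{i=1}^k c(x_i,y_{i+1})]\big)\prod_{i=1}^k\frac{d\pi}{dP}(x_i,y_{i+1})$ for all $k$ and points, $y_{k+1}:=y_1$. $\Gamma$ is $c$-cyclically monotone. A proper function $\psi:\mathsf{X}\to(-\infty,\infty]$ is $c$-convex if $\psi(x)=\sup_{y\in\mathsf{Y}}[\zeta(y)-c(x,y)]$ for some $\zeta:\mathsf{Y}\to[-\infty,\infty]$; its $c$-conjugate is $\psi^c(y):=\inf_{x\in\mathsf{X}}[\psi(x)+c(x,y)]$ and its $c$-subdifferential is $\partial_c\psi=\{(x,y):\psi^c(y)-\psi(x)=c(x,y)\}$. A Kantorovich potential is a $c$-convex $\psi$ with $\Gamma\subset\partial_c\psi$. The function $I$ is $I(x,y):=\sup_{k\ge2}\sup_{(x_i,y_i)_{i=2}^k\subset\Gamma}\sup_{\sigma\in\Sigma(k)}\sum_{i=1}^k c(x_i,y_i)-\sum_{i=1}^k c(x_i,y_{\sigma(i)})$ with $(x_1,y_1):=(x,y)$ and $\Sigma(k)$ the permutations of $\{1,\dots,k\}$. *)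

(* Defs.v *)
From HB Require Import structures.
From mathcomp Require Import all_boot all_order all_algebra.
From mathcomp Require Import fingroup perm.
From mathcomp Require Import all_classical all_reals all_analysis.
Set Implicit Arguments. Unset Strict Implicit. Unset Printing Implicit Defensive.
Import Order.TTheory GRing.Theory Num.Theory.
Import numFieldNormedType.Exports.
Local Open Scope classical_set_scope.
Local Open Scope ring_scope.

Definition borel {R : realType} (T : completePseudoMetricType R) :=
  g_sigma_algebraType (@open T).

(* A Polish space, represented by a complete metric inducing its topology:
   Hausdorff (so the pseudometric is a metric) and separable. *)
Definition polish {R : realType} (T : completePseudoMetricType R) : Prop :=
  hausdorff_space T /\ exists D : set T, countable D /\ dense D.

Definition coupling {R : realType} {X Y : completePseudoMetricType R}
  (mu : probability (borel X) R) (nu : probability (borel Y) R)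
  (pi : probability (borel X * borel Y)%type R) : Prop :=
  (forall A : set (borel X), measurable A -> pi (A `*` setT) = mu A) /\
  (forall B : set (borel Y), measurable B -> pi (setT `*` B) = nu B).

Definition cyclically_invariant {R : realType} {X Y : completePseudoMetricType R}
  (c : X * Y -> R) (eps : R)
  (mu : probability (borel X) R) (nu : probability (borel Y) R)
  (pi : probability (borel X * borel Y)%type R) : Prop :=
  pi `<< (mu \x nu)%E /\ (mu \x nu)%E `<< pi /\
  exists f : X * Y -> R,
    (forall z, 0 < f z) /\
    measurable_fun setT (f : borel X * borel Y -> R) /\
    (forall A : set (borel X * borel Y), measurable A ->
       pi A = (\int[(mu \x nu)%E]_(z in A) (f z)%:E)%E) /\
    (forall (k : nat) (x : nat -> X) (y : nat -> Y),
       \prod_(i < k) f (x i, y i) =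
       expR (- eps^-1 * (\sum_(i < k) c (x i, y i)
                        - \sum_(i < k) c (x i, y (i.+1 %% k)%N)))
       * \prod_(i < k) f (x i, y (i.+1 %% k)%N)).

Definition weak_conv {R : realType} {X Y : completePseudoMetricType R}
  (pi : R -> probability (borel X * borel Y)%type R)
  (pis : probability (borel X * borel Y)%type R) : Prop :=
  forall f : X * Y -> R, continuous f -> (exists M : R, forall z, `|f z| <= M) ->
    (fun e => (\int[pi e]_z (f z)%:E)%E) @ 0^'+ --> (\int[pis]_z (f z)%:E)%E.

(* Support of a measure: points all of whose open neighbourhoods have
   positive measure (= the smallest closed set of full measure). *)
Definition spt {R : realType} {X Y : completePseudoMetricType R}
  (pis : probability (borel X * borel Y)%type R) : set (X * Y) :=
  [set z | forall U : set (X * Y), open U -> U z -> (0 < pis U)%E].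

Definition projX {X Y : Type} (G : set (X * Y)) : set X :=
  [set x | exists y, G (x, y)].
Definition projY {X Y : Type} (G : set (X * Y)) : set Y :=
  [set y | exists x, G (x, y)].

Definition c_convex {R : realType} {X Y : Type} (c : X * Y -> R)
  (psi : X -> \bar R) : Prop :=
  (forall x, psi x != -oo%E) /\ (exists x, psi x != +oo%E) /\
  exists zeta : Y -> \bar R,
    forall x, psi x = ereal_sup [set (zeta y - (c (x, y))%:E)%E | y in setT].

Definition c_conj {R : realType} {X Y : Type} (c : X * Y -> R)
  (psi : X -> \bar R) (y : Y) : \bar R :=
  ereal_inf [set (psi x + (c (x, y))%:E)%E | x in setT].

Definition c_subdiff {R : realType} {X Y : Type} (c : X * Y -> R)
  (psi : X -> \bar R) : set (X * Y) :=
  [set z | (c_conj c psi z.2 - psi z.1)%E = (c z)%:E].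

Definition kantorovich_potential {R : realType} {X Y : Type} (c : X * Y -> R)
  (Gamma : set (X * Y)) (psi : X -> \bar R) : Prop :=
  c_convex c psi /\ Gamma `<=` c_subdiff c psi.

(* The function I: sup over k >= 2 (written k.+2), points (x_i,y_i)_{i>=2}
   in Gamma (index 0 here plays the role of index 1), permutations s. *)
Definition Ifun {R : realType} {X Y : Type} (c : X * Y -> R)
  (Gamma : set (X * Y)) (x : X) (y : Y) : \bar R :=
  ereal_sup [set v | exists (k : nat) (xs : 'I_k.+2 -> X) (ys : 'I_k.+2 -> Y)
                        (s : {perm 'I_k.+2}),
     [/\ xs ord0 = x, ys ord0 = y, (forall i, i != ord0 -> Gamma (xs i, ys i)) &
      v = (\sum_i c (xs i, ys i) - \sum_i c (xs i, ys (s i)))%:E]].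

(* Main.v *)
Set Warnings "-all".
From mathcomp Require Import lra.
Require Import Defs.
From HB Require Import structures.
From mathcomp Require Import all_boot all_order all_algebra.
From mathcomp Require Import fingroup perm.
From mathcomp Require Import all_classical all_reals all_analysis.
Import Order.TTheory GRing.Theory Num.Theory.
Import numFieldNormedType.Exports.
Local Open Scope classical_set_scope.
Local Open Scope ring_scope.
Definition is_chain {X Y : Type} (G : set (X * Y)) (x0 : X) (y0 : Y)
  (n : nat) (xs : nat -> X) (ys : nat -> Y) : Prop :=
  [/\ xs 0%N = x0, ys 0%N = y0 & forall i, (i <= n)%N -> G (xs i, ys i)].

Definition cval {R : realType} {X Y : Type} (c : X * Y -> R) (n : nat)
  (xs : nat -> X) (ys : nat -> Y) : R :=
  \sum_(i < n) (c (xs i, ys i) - c (xs i.+1, ys i)) + c (xs n, ys n).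

Definition zeta {R : realType} {X Y : Type} (c : X * Y -> R) (G : set (X * Y))
  (x0 : X) (y0 : Y) (w : Y) : \bar R :=
  ereal_sup [set v | exists n xs ys, [/\ is_chain G x0 y0 n xs ys, ys n = w &
     v = (cval c n xs ys)%:E]].

Definition phi {R : realType} {X Y : Type} (c : X * Y -> R) (G : set (X * Y))
  (x0 : X) (y0 : Y) (z : X) : \bar R :=
  ereal_sup [set (zeta c G x0 y0 w - (c (z, w))%:E)%E | w in setT].

Lemma phi_ge {R : realType} {X Y : Type} (c : X * Y -> R) (G : set (X * Y))
  (x0 : X) (y0 : Y) z n xs ys : is_chain G x0 y0 n xs ys ->
  ((cval c n xs ys - c (z, ys n))%:E <= phi c G x0 y0 z)%E.
Proof.
move=> Hch; apply: le_trans (ereal_sup_ubound _); last by exists (ys n).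
rewrite EFinB; apply: leeB => //.
by apply: ereal_sup_ubound; exists n, xs, ys.
Qed.

Lemma phi_le {R : realType} {X Y : Type} (c : X * Y -> R) (G : set (X * Y))
  (x0 : X) (y0 : Y) z (B : \bar R) :
  (forall n xs ys, is_chain G x0 y0 n xs ys ->
     ((cval c n xs ys - c (z, ys n))%:E <= B)%E) ->
  (phi c G x0 y0 z <= B)%E.
Proof.
move=> H; apply: ge_ereal_sup => _ [w _ <-].
rewrite leeBlDr //; apply: ge_ereal_sup => _ [n [xs [ys [Hch Hw ->]]]].
by rewrite -leeBlDr // -EFinB -Hw; apply: H.
Qed.

Lemma chain_triv {X Y : Type} (G : set (X * Y)) x0 y0 :
  G (x0, y0) -> is_chain G x0 y0 0 (fun _ => x0) (fun _ => y0).
Proof. by move=> H; split. Qed.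

Lemma cval_triv {R : realType} {X Y : Type} (c : X * Y -> R) x0 y0 :
  cval c 0 (fun _ => x0) (fun _ => y0) = c (x0, y0).
Proof. by rewrite /cval big_ord0 add0r. Qed.

Definition ext {T : Type} (n : nat) (f : nat -> T) (a : T) : nat -> T :=
  fun i => if i == n.+1 then a else f i.

Lemma chain_ext {X Y : Type} (G : set (X * Y)) x0 y0 n xs ys a b :
  is_chain G x0 y0 n xs ys -> G (a, b) ->
  is_chain G x0 y0 n.+1 (ext n xs a) (ext n ys b).
Proof.
move=> [H0 H1 H2] Hab; split => //.
move=> i; rewrite /ext; case: eqP => // Hi; rewrite leq_eqVlt ltnS.
by case/orP => [/eqP//|]; apply: H2.
Qed.

Lemma cval_ext {R : realType} {X Y : Type} (c : X * Y -> R) n xs ys a b :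
  cval c n.+1 (ext n xs a) (ext n ys b) = cval c n xs ys - c (a, ys n) + c (a, b).
Proof.
rewrite /cval big_ord_recr /= /ext !eqxx.
have -> : (n == n.+1) = false by rewrite eqn_leq ltnn andbF.
rewrite (eq_bigr (fun i : 'I_n => c (xs i, ys i) - c (xs i.+1, ys i))); last first.
  move=> i _; have /ltn_eqF -> : (i < n.+1)%N by apply: ltnW; rewrite ltnS.
  by have /ltn_eqF -> : (i.+1 < n.+1)%N by rewrite ltnS.
rewrite addrA.
by [].
Qed.
Lemma cconj_le {R : realType} {X Y : Type} (c : X * Y -> R) (psi : X -> \bar R) a b :
  (c_conj c psi b <= psi a + (c (a, b))%:E)%E.
Proof. by apply: ereal_inf_lbound; exists a. Qed.

Lemma pot_fin {R : realType} {X Y : Type} {c : X * Y -> R} {G : set (X * Y)}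
  {psi : X -> \bar R} : kantorovich_potential c G psi ->
  forall a b, G (a, b) -> exists r : R, psi a = r%:E /\ c_conj c psi b = (r + c (a, b))%:E.
Proof.
move=> [[Hn _] Hsub] a b Gab.
have := Hsub _ Gab; rewrite /c_subdiff /=.
have := Hn a.
case: (psi a) => [r| |] // _; case: (c_conj c psi b) => [r'| |] //= [<-].
by exists r; split => //; congr (_%:E); lra.
Qed.
Lemma key_ineq {R : realType} {X Y : Type} {c : X * Y -> R} {G : set (X * Y)}
  {psi : X -> \bar R} : kantorovich_potential c G psi ->
  forall a b z, G (a, b) -> projX G z ->
  c (a, b) - c (z, b) <= fine (psi z) - fine (psi a).
Proof.
move=> Hk a b z Gab [yz Gz].
have [r [Ha Hb]] := pot_fin Hk _ _ Gab.
have [rz [Hz _]] := pot_fin Hk _ _ Gz.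
have := cconj_le c psi z b; rewrite Hb Hz Ha /= lee_fin; lra.
Qed.

Lemma chain_bound {R : realType} {X Y : Type} {c : X * Y -> R} {G : set (X * Y)}
  {psi : X -> \bar R} : kantorovich_potential c G psi ->
  forall x0 y0 n xs ys z, is_chain G x0 y0 n xs ys -> projX G z ->
  cval c n xs ys - c (z, ys n) <= fine (psi z) - fine (psi x0).
Proof.
move=> Hk x0 y0 n xs ys z [H0 _ HG] Hz.
have Hs : forall m, (m <= n)%N ->
    \sum_(i < m) (c (xs i, ys i) - c (xs i.+1, ys i)) <= fine (psi (xs m)) - fine (psi x0).
  elim => [|m IH] Hm; first by rewrite big_ord0 H0 subrr.
  rewrite big_ord_recr /=.
  have := IH (ltnW Hm).
  have := key_ineq Hk _ _ _ (HG m (ltnW Hm)) (ex_intro _ (ys m.+1) (HG m.+1 Hm)).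
  lra.
have := Hs n (leqnn n).
have := key_ineq Hk _ _ _ (HG n (leqnn n)) Hz.
rewrite /cval; lra.
Qed.
Lemma pot_le {R : realType} {X Y : Type} {c : X * Y -> R} {G : set (X * Y)}
  {psi : X -> \bar R} : kantorovich_potential c G psi ->
  forall a b, projX G a -> projY G b ->
  fine (c_conj c psi b) <= fine (psi a) + c (a, b).
Proof.
move=> Hk a b [ya Ga] [xb Gb].
have [r [Ha _]] := pot_fin Hk _ _ Ga.
have [r' [_ Hb]] := pot_fin Hk _ _ Gb.
have := cconj_le c psi a b; rewrite Ha Hb /= lee_fin; lra.
Qed.

Lemma pot_eq {R : realType} {X Y : Type} {c : X * Y -> R} {G : set (X * Y)}
  {psi : X -> \bar R} : kantorovich_potential c G psi ->
  forall a b, G (a, b) -> fine (c_conj c psi b) = fine (psi a) + c (a, b).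
Proof.
move=> Hk a b Gab; have [r [Ha Hb]] := pot_fin Hk _ _ Gab.
by rewrite Ha Hb.
Qed.

Lemma I_upper {R : realType} {X Y : Type} {c : X * Y -> R} {G : set (X * Y)}
  {psi : X -> \bar R} : kantorovich_potential c G psi ->
  forall x y, projX G x -> projY G y ->
  (Ifun c G x y <= (c (x, y) - fine (c_conj c psi y) + fine (psi x))%:E)%E.
Proof.
move=> Hk x y Xx Yy.
apply: ge_ereal_sup => _ [k [xs [ys [s [Hx Hy HG ->]]]]]; rewrite lee_fin.
pose P i := fine (psi (xs i)); pose Q i := fine (c_conj c psi (ys i)).
have hX : forall i, projX G (xs i).
  by move=> i; case: (eqVneq i ord0) => [->|/HG Hi]; [rewrite Hx | exists (ys i)].
have hY : forall i, projY G (ys i).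
  by move=> i; case: (eqVneq i ord0) => [->|/HG Hi]; [rewrite Hy | exists (xs i)].
have E1 : \sum_i c (xs i, ys i) = c (x, y) - (Q ord0 - P ord0) + \sum_i (Q i - P i).
  rewrite (bigD1 ord0) //= [in RHS](bigD1 ord0) //= Hx Hy.
  rewrite (eq_bigr (fun i => Q i - P i)); first by lra.
  by move=> i /HG Hi; rewrite /Q /P (pot_eq Hk _ _ Hi); lra.
have E2 : \sum_i (Q (s i) - P i) <= \sum_i c (xs i, ys (s i)).
  apply: ler_sum => i _; have := pot_le Hk _ _ (hX i) (hY (s i)); rewrite /Q /P; lra.
have E3 : \sum_i (Q (s i) - P i) = \sum_i (Q i - P i).
  rewrite !sumrB; congr (_ - _).
  by rewrite [RHS](reindex_inj (@perm_inj _ s)).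
move: E1 E2 E3; rewrite /Q /P Hx Hy; lra.
Qed.
Lemma chain_to_I {R : realType} {X Y : Type} (c : X * Y -> R) (G : set (X * Y))
  x' y x n xs ys : G (x', y) -> is_chain G x' y n xs ys ->
  (((cval c n xs ys - c (x, ys n)) + (c (x, y) - c (x', y)))%:E <= Ifun c G x y)%E.
Proof.
move=> Gxy [H0 H1 HG].
case: n HG => [|m] HG.
  rewrite /cval big_ord0 add0r H0 H1.
  apply: ereal_sup_ubound.
  exists 0%N, (fun i : 'I_2 => if i == ord0 then x else x'), (fun _ => y), 1%g.
  split => //.
    by move=> i /negbTE ->.
  congr (_%:E); rewrite (eq_bigr (fun i : 'I_2 => c ((if i == ord0 then x else x'), y))) //.
  lra.
pose s : {perm 'I_m.+2} := perm (@ord_pred_inj m.+2).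
have Hs : forall i, nat_of_ord (s i) = nat_of_ord (ord_pred i) by move=> i; rewrite /s permE.
apply: ereal_sup_ubound.
exists m, (fun i : 'I_m.+2 => if i == ord0 then x else xs i), (fun i : 'I_m.+2 => ys i),
  s.
split => //.
  move=> i /negbTE ->; apply: HG; rewrite -ltnS; exact: ltn_ord.
have E : \sum_(i < m.+2) c (if i == ord0 then x else xs i, ys i) -
   \sum_(i < m.+2) c (if i == ord0 then x else xs i, ys (s i)) =
   cval c m.+1 xs ys - c (x, ys m.+1) + (c (x, y) - c (x', y)).
  rewrite (big_ord_recl m.+1) (big_ord_recl m.+1) Hs eqxx.
  rewrite (eq_bigr (fun j : 'I_m.+1 => c (xs j.+1, ys j.+1))); last by move=> j _.
  rewrite [Z in _ - (_ + Z) = _](eq_bigr (fun j : 'I_m.+1 => c (xs j.+1, ys j))); last first.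
    move=> j _; congr (c (_, ys _)); apply: eq_trans (Hs _) _.
    by rewrite /= add0n modnDr modn_small //; apply: leqW (ltn_ord j).
  have -> : nat_of_ord (@ord_pred m.+2 ord0) = m.+1 by rewrite /= modn_small.
  have E : \sum_(i < m.+1) c (xs i, ys i) + c (xs m.+1, ys m.+1) =
     c (xs 0%N, ys 0%N) + \sum_(i < m.+1) c (xs i.+1, ys i.+1).
    by rewrite -(big_ord_recr m.+1 (fun i => c (xs i, ys i))) big_ord_recl.
  move: E; rewrite /cval sumrB H0 H1 /=; lra.
exact: (congr1 _ (esym E)).
Qed.
Lemma I_lower {R : realType} {X Y : Type} {c : X * Y -> R} {G : set (X * Y)}
  {psi : X -> \bar R} : kantorovich_potential c G psi ->
  (forall psi1 psi2 : X -> \bar R,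
     c_convex c psi1 -> c_convex c psi2 ->
     G `<=` c_subdiff c psi1 -> G `<=` c_subdiff c psi2 ->
     exists C : R, forall x, projX G x -> (psi1 x - psi2 x)%E = C%:E) ->
  forall x y, projX G x -> projY G y ->
  ((c (x, y) - fine (c_conj c psi y) + fine (psi x))%:E <= Ifun c G x y)%E.
Proof.
move=> Hk Hu x y [y0 Gx] [x' Gy].
pose ph := phi c G x' y.
have Hge : forall z, ((c (x', y) - c (z, y))%:E <= ph z)%E.
  by move=> z; have := phi_ge c G x' y z _ _ _ (chain_triv G x' y Gy); rewrite cval_triv.
have Hle : forall z, projX G z -> (ph z <= (fine (psi z) - fine (psi x'))%:E)%E.
  move=> z Hz; apply: phi_le => n xs ys Hch; rewrite lee_fin.
  exact: chain_bound Hk _ _ _ _ _ _ Hch Hz.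
have Hfin : forall z, projX G z -> ph z = (fine (ph z))%:E.
  by move=> z Hz; have := Hge z; have := Hle z Hz; case: (ph z).
have Hcc : c_convex c ph.
  split; first by move=> z; have := Hge z; case: (ph z).
  split; last by exists (zeta c G x' y).
  by exists x'; rewrite (Hfin x'); last by exists y.
have Hsub : G `<=` c_subdiff c ph.
  move=> [a b] Gab; rewrite /c_subdiff /=.
  have Ha : projX G a by exists b.
  have Hconj : c_conj c ph b = (fine (ph a) + c (a, b))%:E.
    apply: le_anti; apply/andP; split.
      rewrite EFinD -(Hfin a Ha); exact: cconj_le.
    apply: le_ereal_inf_tmp => _ [z _ <-].
    have H1 : (ph a <= ph z + (c (z, b) - c (a, b))%:E)%E.
      apply: phi_le => n xs ys Hch.
      have := phi_ge c G x' y z _ _ _ (@chain_ext _ _ G _ _ _ _ _ _ _ Hch Gab).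
      rewrite cval_ext /ext eqxx => H.
      rewrite -leeBlDr // -EFinB; apply: le_trans H; rewrite lee_fin; lra.
    rewrite (Hfin a Ha) in H1; move: H1.
    case: (ph z) => [r| |] //=.
      by rewrite -!EFinD !lee_fin => H; lra.
    by move=> _; rewrite leey.
  rewrite Hconj (Hfin a Ha) -EFinB; congr (_%:E); lra.
have [C HC] := Hu psi ph (proj1 Hk) Hcc (proj2 Hk) Hsub.
have [rx [Hpx _]] := pot_fin Hk _ _ Gx.
have [rx' [Hpx' Hq]] := pot_fin Hk _ _ Gy.
have Cx := HC x (ex_intro _ y0 Gx).
have Cx' := HC x' (ex_intro _ y Gy).
rewrite Hpx (Hfin x (ex_intro _ y0 Gx)) -EFinB in Cx.
rewrite Hpx' (Hfin x' (ex_intro _ y Gy)) -EFinB in Cx'.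
move: Cx Cx' => [Cx] [Cx'].
have H0 := Hge x'; rewrite (Hfin x' (ex_intro _ y Gy)) lee_fin in H0.
have Hphi : (ph x <= Ifun c G x y - (c (x, y) - c (x', y))%:E)%E.
  apply: phi_le => n xs ys Hch; rewrite leeBrDr // -EFinD.
  exact: (chain_to_I c G x' y x _ _ _ Gy Hch).
rewrite leeBrDr // (Hfin x (ex_intro _ y0 Gx)) -EFinD in Hphi.
apply: le_trans Hphi; rewrite Hpx Hq /= lee_fin; lra.
Qed.
Lemma I_eq {R : realType} {X Y : Type} {c : X * Y -> R} {G : set (X * Y)}
  {psi : X -> \bar R} : kantorovich_potential c G psi ->
  (forall psi1 psi2 : X -> \bar R,
     c_convex c psi1 -> c_convex c psi2 ->
     G `<=` c_subdiff c psi1 -> G `<=` c_subdiff c psi2 ->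
     exists C : R, forall x, projX G x -> (psi1 x - psi2 x)%E = C%:E) ->
  forall x y, projX G x -> projY G y ->
  Ifun c G x y = (c (x, y) - fine (c_conj c psi y) + fine (psi x))%:E.
Proof.
move=> Hk Hu x y Hx Hy; apply: le_anti; apply/andP; split.
  exact: I_upper.
exact: I_lower.
Qed.

Theorem proposition4p5 (R : realType) (X Y : completePseudoMetricType R)
  (polishX : polish X) (polishY : polish Y)
  (mu : probability (borel X) R) (nu : probability (borel Y) R)
  (c : X * Y -> R) (c_ge0 : forall z, 0 <= c z) (c_cont : continuous c)
  (pi : R -> probability (borel X * borel Y)%type R)
  (pi_coupling : forall eps, 0 < eps -> coupling mu nu (pi eps))
  (pi_inv : forall eps, 0 < eps -> cyclically_invariant c eps mu nu (pi eps))
  (pis : probability (borel X * borel Y)%type R)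
  (pis_coupling : coupling mu nu pis)
  (pi_conv : weak_conv pi pis)
  (uniq_pot : forall psi1 psi2 : X -> \bar R,
     c_convex c psi1 -> c_convex c psi2 ->
     spt pis `<=` c_subdiff c psi1 -> spt pis `<=` c_subdiff c psi2 ->
     exists C : R, forall x, projX (spt pis) x -> (psi1 x - psi2 x)%E = C%:E) :
  forall psi : X -> \bar R, kantorovich_potential c (spt pis) psi ->
  (forall x y, projX (spt pis) x -> projY (spt pis) y ->
     Ifun c (spt pis) x y = ((c (x, y))%:E - c_conj c psi y + psi x)%E /\
     (Ifun c (spt pis) x y < +oo)%E) /\
  (forall x y x' y', projX (spt pis) x -> projY (spt pis) y ->
     projX (spt pis) x' -> projY (spt pis) y' ->
     spt pis (x', y) -> spt pis (x, y') ->
     (Ifun c (spt pis) x y + Ifun c (spt pis) x' y')%E =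
     (c (x, y) + c (x', y') - c (x, y') - c (x', y))%:E).
Proof.
move=> psi Hk.
have HI := I_eq Hk uniq_pot.
split.
  move=> x y Hx Hy; rewrite HI //; split; last exact: ltry.
  have [yx Gx] := Hx; have [xy Gy] := Hy.
  have [r [Hr _]] := pot_fin Hk _ _ Gx.
  have [r' [_ Hr']] := pot_fin Hk _ _ Gy.
  by rewrite Hr Hr'.
move=> x y x' y' Hx Hy Hx' Hy' Gxy Gyx.
rewrite !HI // (pot_eq Hk _ _ Gxy) (pot_eq Hk _ _ Gyx) -EFinD; congr (_%:E); lra.
Qed.
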